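(* Let $g$ be a generating function, $t$ a witness function, and $\mathcal P_g,\mathcal P_t$ sets of p-conditions. Then for every program $\Pi$, the graph $T(\mathcal P_g,\mathcal P_t,g,t)(\Pi)$ is finite and acyclic.
   Context: Literals are atoms $a$ or negations $\neg a$; $\overline{l}$ is the complement of $l$. A set of literals is consistent if it contains no literal together with its complement; $\mathrm{atoms}(L)$ is the set of atoms in $L$; $L$ is complete over $X$ if $\mathrm{atoms}(L)=X$. A program $\Pi$ is a finite set of rules $A\leftarrow B$, with head $A$ a possibly empty disjunction of atoms and body $B$ an expression $a_1,\dots,a_j,\ not\ a_{j+1},\dots,not\ a_k$ (identified with a conjunction of literals); non-disjunctive if every head has at most one atom. $\mathrm{atoms}(\Pi)$ is the set of atoms of $\Pi$. A p-condition maps a program $\Pi$ and a set $L$ of literals over $\mathrm{atoms}(\Pi)$ to a set of literals over $\mathrm{atoms}(\Pi)$; $\mathrm{Out}_{\mathcal P}(\Pi,M)=\bigcup_{p\in\mathcal P}p(\Pi,M)$. A generating function $g$ maps each program $\Pi$ to a program $g(\Pi)$ with $\mathrm{atoms}(\Pi)\subseteq\mathrm{atoms}(g(\Pi))$. A set $M$ covers $\Pi$ if $\mathrm{atoms}(\Pi)\subseteq\mathrm{atoms}(M)$. A witness function $t$ maps a program $\Pi$ and a consistent $M$ covering $\Pi$ to a non-disjunctive program $t(\Pi,M)$. $\mathrm{atoms}(t,\Pi,X)$ is the union of $\mathrm{atoms}(t(\Pi,L))$ over consistent $L$ complete over $X$. A record relative to a set $X$ of atoms is a finite string of literals over $X$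 and possibly $\bot$, without repetitions, in which some literals may be annotated as decision literals $l^\Delta$; it is identified when convenient with the set of its elements and is inconsistent if it contains $\bot$ or a literal and its complement. A state relative to $X,X'$ is $(L,R)_s$ ($L$ a record relative to $X$, $R$ relative to $X'$, $s\in\{\mathcal L,\mathcal R\}$), or $\mathit{Ok}(L)$ ($L$ a record relative to $X$), or $\mathit{Failstate}$. $T(\mathcal P_{\mathcal L},\mathcal P_{\mathcal R},g,t)(\Pi)$ has as nodes the states relative to $\mathrm{atoms}(g(\Pi))$ and $\mathrm{atoms}(t,\Pi,\mathrm{atoms}(g(\Pi)))$, initial state $(\emptyset,\emptyset)_{\mathcal L}$, and edges given by ($L,L',R,R'$ records, $l$ a literal): Left-rules: Conclude$_{\mathcal L}$: $(L,\emptyset)_{\mathcal L}\Rightarrow\mathit{Failstate}$ if $L$ is inconsistent with no decision literal. Backtrack$_{\mathcal L}$: $(L\,l^\Delta L',\emptyset)_{\mathcal L}\Rightarrow(L\,\overline l,\emptyset)_{\mathcal L}$ if $L\,l^\Delta L'$ is inconsistent and $L'$ has no decision literal. Propagate$_{\mathcal L}$: $(L,\emptyset)_{\mathcal L}\Rightarrow(L\,l,\emptyset)_{\mathcal L}$ if $l\in\mathrm{Out}_{\mathcal P_{\mathcal L}}(g(\Pi),L)$. Decide$_{\mathcal L}$: $(L,\emptyset)_{\mathcal L}\Rightarrow(L\,l^\Delta,\emptyset)_{\mathcal L}$ if $L$ consistent, $l$ over $\mathrm{atoms}(g(\Pi))$, neither $l$ nor $\overline l$ in $L$. Cross$_{\mathcal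 L\mathcal R}$: $(L,\emptyset)_{\mathcal L}\Rightarrow(L,\emptyset)_{\mathcal R}$ if no left-rule applies. Right-rules: Conclude$_{\mathcal R}$: $(L,R)_{\mathcal R}\Rightarrow\mathit{Ok}(L)$ if $R$ is inconsistent with no decision literal. Backtrack$_{\mathcal R}$: $(L,R\,l^\Delta R')_{\mathcal R}\Rightarrow(L,R\,\overline l)_{\mathcal R}$ if $R\,l^\Delta R'$ inconsistent and $R'$ has no decision literal. Propagate$_{\mathcal R}$: $(L,R)_{\mathcal R}\Rightarrow(L,R\,l)_{\mathcal R}$ if $l\in\mathrm{Out}_{\mathcal P_{\mathcal R}}(t(\Pi,L),R)$. Decide$_{\mathcal R}$: $(L,R)_{\mathcal R}\Rightarrow(L,R\,l^\Delta)_{\mathcal R}$ if $R$ consistent, $l$ over $\mathrm{atoms}(t(\Pi,L))$, neither $l$ nor $\overline l$ in $R$. Conclude$_{\mathcal R\mathcal L}$: $(L,R)_{\mathcal R}\Rightarrow\mathit{Failstate}$ if no right-rule applies and $L$ has no decision literal. Backtrack$_{\mathcal R\mathcal L}$: $(L\,l^\Delta L',R)_{\mathcal R}\Rightarrow(L\,\overline l,\emptyset)_{\mathcal L}$ if no right-rule applies and $L'$ has no decision literal. *)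

(* Defs.v *)
From Stdlib Require Import Relations List.
From mathcomp Require Import all_boot.
Set Implicit Arguments.
Unset Strict Implicit.
Unset Printing Implicit Defensive.

Section ASP.
Variable A : eqType.

(* literal (a, true) = a ; (a, false) = not a *)
Definition lit := (A * bool)%type.
Definition compl (l : lit) : lit := (l.1, ~~ l.2).

(* rule  head <- pos, not neg ;  head is a (possibly empty) disjunction *)
Record rule := Rule { head : seq A; pbody : seq A; nbody : seq A }.
Definition program := seq rule.
Definition rule_atoms (r : rule) : seq A := head r ++ pbody r ++ nbody r.
Definition atoms (P : program) : seq A := flatten (map rule_atoms P).
Definition non_disjunctive (P : program) : bool :=
  all (fun r => size (head r) <= 1) P.

(* sets of literals are represented by lists *)
Definition lconsistent (L : seq lit) : bool := all (fun l => compl l \notin L) L.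
Definition latoms (L : seq lit) : seq A := map fst L.
Definition covers (P : program) (M : seq lit) : Prop :=
  {subset atoms P <= latoms M}.
Definition complete_over (L : seq lit) (X : seq A) : Prop := latoms L =i X.

Definition pcond := program -> seq lit -> seq lit.
Definition is_pcond (p : pcond) : Prop :=
  forall P L, {subset latoms L <= atoms P} -> {subset latoms (p P L) <= atoms P}.
Definition Out (PP : pcond -> Prop) (P : program) (M : seq lit) (l : lit) : Prop :=
  exists p, PP p /\ l \in p P M.

Definition is_gen (g : program -> program) : Prop :=
  forall P, {subset atoms P <= atoms (g P)}.
Definition is_wit (t : program -> seq lit -> program) : Prop :=
  forall P M, lconsistent M -> covers P M -> non_disjunctive (t P M).
Definition atoms_t (t : program -> seq lit -> program) (P : program) (X : seq A)
  (a : A) : Prop :=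
  exists L : seq lit, uniq L /\ lconsistent L /\ complete_over L X /\ a \in atoms (t P L).

(* records: None = bottom, Some (l, true) = decision literal l^Delta,
   Some (l, false) = ordinary literal l *)
Definition elem := option (lit * bool).
Definition record := seq elem.
Definition record_lits (R : record) : seq lit := pmap (omap fst) R.
Definition is_record (X : A -> Prop) (R : record) : Prop :=
  uniq (map (omap fst) R) /\ forall l, l \in record_lits R -> X l.1.
Definition rinconsistent (R : record) : bool :=
  (None \in R) || ~~ lconsistent (record_lits R).
Definition has_decision (R : record) : bool :=
  has (fun e => if e is Some (_, true) then true else false) R.

Inductive side := SL | SR.
Inductive state :=
  | Pair of record & record & side
  | Ok of record
  | Failstate.

Definition is_state (X X' : A -> Prop) (s : state) : Prop :=
  match s with
  | Pair L R _ => is_record X L /\ is_record X' R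
  | Ok L => is_record X L
  | Failstate => True
  end.

Variables (PL PR : pcond -> Prop) (g : program -> program)
  (t : program -> seq lit -> program) (Pi : program).

Definition XL : A -> Prop := fun a => a \in atoms (g Pi).
Definition XR : A -> Prop := atoms_t t Pi (atoms (g Pi)).
Definition node (s : state) : Prop := is_state XL XR s.

Inductive left_rule : state -> state -> Prop :=
  | ConcludeL L : rinconsistent L -> ~~ has_decision L ->
      left_rule (Pair L [::] SL) Failstate
  | BacktrackL L0 l L' : rinconsistent (L0 ++ Some (l, true) :: L') ->
      ~~ has_decision L' ->
      left_rule (Pair (L0 ++ Some (l, true) :: L') [::] SL)
                (Pair (rcons L0 (Some (compl l, false))) [::] SL)
  | PropagateL L l : Out PL (g Pi) (record_lits L) l ->
      left_rule (Pair L [::] SL) (Pair (rcons L (Some (l, false))) [::] SL)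
  | DecideL L l : ~~ rinconsistent L -> l.1 \in atoms (g Pi) ->
      l \notin record_lits L -> compl l \notin record_lits L ->
      left_rule (Pair L [::] SL) (Pair (rcons L (Some (l, true))) [::] SL).

Inductive right_rule : state -> state -> Prop :=
  | ConcludeR L R : rinconsistent R -> ~~ has_decision R ->
      right_rule (Pair L R SR) (Ok L)
  | BacktrackR L R0 l R' : rinconsistent (R0 ++ Some (l, true) :: R') ->
      ~~ has_decision R' ->
      right_rule (Pair L (R0 ++ Some (l, true) :: R') SR)
                 (Pair L (rcons R0 (Some (compl l, false))) SR)
  | PropagateR L R l : Out PR (t Pi (record_lits L)) (record_lits R) l ->
      right_rule (Pair L R SR) (Pair L (rcons R (Some (l, false))) SR)
  | DecideR L R l : ~~ rinconsistent R -> l.1 \in atoms (t Pi (record_lits L)) ->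
      l \notin record_lits R -> compl l \notin record_lits R ->
      right_rule (Pair L R SR) (Pair L (rcons R (Some (l, true))) SR).

(* a rule "applies" at a node if it yields an edge to a node *)
Definition lstep (s s' : state) : Prop := node s /\ node s' /\ left_rule s s'.
Definition rstep (s s' : state) : Prop := node s /\ node s' /\ right_rule s s'.

Inductive other_rule : state -> state -> Prop :=
  | CrossLR L : ~ (exists s', lstep (Pair L [::] SL) s') ->
      other_rule (Pair L [::] SL) (Pair L [::] SR)
  | ConcludeRL L R : ~ (exists s', rstep (Pair L R SR) s') -> ~~ has_decision L ->
      other_rule (Pair L R SR) Failstate
  | BacktrackRL L0 l L' R : ~ (exists s', rstep (Pair (L0 ++ Some (l, true) :: L') R SR) s') ->
      ~~ has_decision L' ->
      other_rule (Pair (L0 ++ Some (l, true) :: L') R SR)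
                 (Pair (rcons L0 (Some (compl l, false))) [::] SL).

Definition edge (s s' : state) : Prop :=
  node s /\ node s' /\ (left_rule s s' \/ right_rule s s' \/ other_rule s s').

Definition graph_finite : Prop := exists ns : list state, forall s, node s -> Stdlib.Lists.List.In s ns.
Definition graph_acyclic : Prop := forall s, ~ clos_trans state edge s s.

End ASP.

(* Main.v *)
From Stdlib Require Import Relations List.
Require Import Defs.
From mathcomp Require Import all_boot.
Set Implicit Arguments.
Unset Strict Implicit.

Fixpoint ltl (s1 s2 : seq nat) : bool :=
  match s1, s2 with
  | [::], _ :: _ => true
  | x :: s1', y :: s2' => (x < y) || ((x == y) && ltl s1' s2')
  | _, _ => false
  end.

Lemma ltl_irr s : ltl s s = false.
Proof. by elim: s => //= x s ->; rewrite ltnn eqxx. Qed.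

Lemma ltl_trans s1 s2 s3 : ltl s1 s2 -> ltl s2 s3 -> ltl s1 s3.
Proof.
elim: s1 s2 s3 => [|x s1 IH] [|y s2] [|z s3] //=.
case/orP=> [lxy|/andP[/eqP <- h1]]; case/orP=> [lyz|/andP[/eqP <- h2]].
- by rewrite (ltn_trans lxy lyz).
- by rewrite lxy.
- by rewrite lyz.
- by rewrite eqxx (IH _ _ h1 h2) orbT.
Qed.

Lemma ltl_cat p a b : ltl (p ++ a) (p ++ b) = ltl a b.
Proof. by elim: p => //= x p ->; rewrite ltnn eqxx. Qed.

Lemma ltl_ext s x : ltl s (rcons s x).
Proof. by elim: s => //= y s ->; rewrite eqxx orbT. Qed.

Section S.
Variable A : eqType.

Definition w (e : elem A) : nat := if e is Some (_, true) then 1 else 2.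
Definition ws (R : record A) := map w R.
Definition key (s : state A) : seq nat :=
  match s with
  | Pair L R sd => ws L ++ 0 :: (if sd is SL then 0 else 1) :: ws R
  | _ => [:: 3]
  end.

Lemma key_top L R sd : ltl (key (Pair L R sd)) [:: 3].
Proof. by case: L => [|[[l []]|] L] /=. Qed.

Lemma edge_key PL PR g t Pi s s' :
  edge PL PR g t Pi s s' -> ltl (key s) (key s').
Proof.
case=> _ [_ [[]|[[]|[]]]]; intros;
  rewrite ?key_top //= /ws ?map_cat ?map_rcons /= ?cat_rcons -?catA ?ltl_cat //=;
  by rewrite ?ltl_ext // -cats1 ltl_cat.
Qed.

Lemma ct_key PL PR g t Pi x y :
  clos_trans _ (edge PL PR g t Pi) x y -> ltl (key x) (key y).
Proof.
elim=> [a b e|a b c _ h1 _ h2]; [exact: edge_key e | exact: (ltl_trans h1 h2)].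
Qed.

Lemma acyc PL PR g t Pi : @graph_acyclic A PL PR g t Pi.
Proof. by move=> s /ct_key; rewrite ltl_irr. Qed.

End S.

Lemma In_mem (T : eqType) (x : T) (s : seq T) : x \in s -> List.In x s.
Proof. elim: s => //= y s IH; rewrite in_cons => /orP[/eqP ->|/IH]; auto. Qed.

Fixpoint lists (T : Type) (n : nat) (U : seq T) : seq (seq T) :=
  if n is n'.+1 then [::] :: allpairs (@cons T) U (lists n' U) else [:: [::]].

Lemma lists_mem (T : eqType) (U : seq T) n s :
  size s <= n -> {subset s <= U} -> s \in lists n U.
Proof.
elim: n s => [|n IH] [|x s] //= hs hsub; try by rewrite mem_head.
rewrite in_cons; apply/orP; right; apply: allpairs_f.
  by apply: hsub; rewrite mem_head.
by apply: IH => // y hy; apply: hsub; rewrite in_cons hy orbT.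
Qed.

Section F.
Variable A : eqType.

Definition bools := [:: true; false].
Definition univ (xs : seq A) : seq (elem A) :=
  None :: map Some (allpairs pair (allpairs pair xs bools) bools).

Lemma records_fin (X : A -> Prop) (xs : seq A) :
  (forall a, X a -> a \in xs) ->
  forall R, is_record X R -> R \in lists (size (univ xs)) (univ xs).
Proof.
move=> hX R [hu hl]; have hu' := map_uniq hu.
have hsub : {subset R <= univ xs}.
  move=> [[l b]|] hR; last by rewrite mem_head.
  have : l \in record_lits R.
    by rewrite /record_lits mem_pmap; apply/mapP; exists (Some (l, b)).
  move/hl/hX => hl1.
  rewrite in_cons; apply/orP; right; rewrite mem_map; last by move=> ? ? [].
  clear hR; case: l hl1 => a c ha; apply: allpairs_f; last by case: b.
  by apply: allpairs_f => //; clear ha; case: c.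
by apply: lists_mem => //; apply: uniq_leq_size.
Qed.

Lemma lits_fin' (xs : seq A) L :
  uniq L -> complete_over L xs ->
  L \in lists (size (allpairs pair xs bools)) (allpairs pair xs bools).
Proof.
move=> hu hc; apply: lists_mem; last first.
  move=> [a c] hL; apply: allpairs_f; last by clear hL; case: c.
  by rewrite -hc; apply/mapP; exists (a, c).
apply: uniq_leq_size => // [[a c] hL]; apply: allpairs_f; last by clear hL; case: c.
by rewrite -hc; apply/mapP; exists (a, c).
Qed.

End F.

Theorem lemma4 (A : eqType) (g : program A -> program A)
  (t : program A -> seq (lit A) -> program A) (Pg Pt : pcond A -> Prop) :
  is_gen g -> is_wit t ->
  (forall p, Pg p -> is_pcond p) -> (forall p, Pt p -> is_pcond p) ->
  forall Pi : program A,
    graph_finite g t Pi /\ graph_acyclic Pg Pt g t Pi.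
Proof.
move=> _ _ _ _ Pi; split; last exact: acyc.
pose xsL := atoms (g Pi).
pose V := allpairs pair xsL bools.
pose xsR := flatten [seq atoms (t Pi L) | L <- lists (size V) V].
have hXL : forall a, XL g Pi a -> a \in xsL by [].
have hXR : forall a, XR g t Pi a -> a \in xsR.
  move=> a [L [hu [_ [hc ha]]]]; apply/flatten_mapP; exists L => //.
  exact: lits_fin'.
pose RL := lists (size (univ xsL)) (univ xsL).
pose RR := lists (size (univ xsR)) (univ xsR).
exists (Failstate A :: app (List.map (@Ok A) RL)
  (flat_map (fun L => flat_map (fun R => [:: Pair L R SL; Pair L R SR]) RR) RL)).
case=> [L R sd|L|] hn; last by left.
- right; apply: in_or_app; right; case: hn => hL hR.
  apply/in_flat_map; exists L; split; first by apply: In_mem; exact: records_fin hL.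
  apply/in_flat_map; exists R; split; first by apply: In_mem; exact: records_fin hR.
  by case: sd => /=; auto.
- right; apply: in_or_app; left; apply: in_map; apply: In_mem; exact: records_fin hn.
Qed.
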